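(* Let $p$ be a prime and let $P$ be a finite $p$-group which is a Roquette group. Then $P$ has no non-trivial expansive subgroup whose $P$-core is trivial.
   Context: A finite group $G$ is a Roquette group if all its normal abelian subgroups are cyclic. For $g\in G$ and $T\le G$ write ${}^gT=gTg^{-1}$. For a subgroup $X$ of a group $H$, the $H$-core of $X$ is $\bigcap_{h\in H}hXh^{-1}$, the largest normal subgroup of $H$ contained in $X$. A subgroup $T$ of a finite group $G$ is expansive in $G$ if for every $g\in G\setminus N_G(T)$, the $N_G(T)$-core of the subgroup $({}^gT\cap N_G(T))\,T$ contains $T$ properly. ''Non-trivial'' means $T\neq 1$. *)

(* Defs.v *)
From mathcomp Require Import all_boot all_fingroup all_solvable.
Set Implicit Arguments. Unset Strict Implicit. Unset Printing Implicit Defensive.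
Local Open Scope group_scope.

Definition roquette (gT : finGroupType) (G : {set gT}) : Prop :=
  forall A : {group gT}, A <| G -> abelian A -> cyclic A.

(* Paper convention: ^gT = g T g^-1, which is  T :^ g^-1  in mathcomp
   (mathcomp's T :^ x = x^-1 T x). *)
Definition lconj (gT : finGroupType) (g : gT) (T : {set gT}) : {set gT} :=
  T :^ g^-1.

Definition expansive (gT : finGroupType) (G T : {set gT}) : Prop :=
  T \subset G /\
  forall g, g \in G -> g \notin 'N_G(T) ->
    T \proper gcore ((lconj g T :&: 'N_G(T)) * T) 'N_G(T).

(* Main.v *)
Require Import Defs.
From mathcomp Require Import all_boot all_fingroup all_solvable.
Local Open Scope group_scope.

Lemma roq_index2 (gT : finGroupType) (p : nat) (P : {group gT}) :
  p.-group P -> roquette P -> ~~ abelian P ->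
  exists X : {group gT}, [/\ p = 2, X <| P, cyclic X & #|P : X| = 2].
Proof.
move=> pG dn_G_1 not_cGG.
have [X maxX]: {X | [max X | X <| P & abelian X]}.
  by apply: ex_maxgroup; exists 1%G; rewrite normal1 abelian1.
have nsX : X <| P by case/andP: (maxgroupp maxX).
have cycX: cyclic X by apply: dn_G_1; case/andP: (maxgroupp maxX).
have scX: X \in 'SCN(P) := max_SCN pG maxX.
have [[p2 iX _] | [M [_ _ _]]] := cyclic_SCN pG scX not_cGG cycX.
  by exists X; split.
rewrite 2!inE -andbA => /and3P[sEG abelE dimE_2] charE.
have:= dn_G_1 _ (char_normal charE) (abelem_abelian abelE).
by rewrite (abelem_cyclic abelE) (eqP dimE_2).
Qed.

Lemma cyc2_elt (gT : finGroupType) (t y : gT) :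
  #[t] = 2 -> y \in <[t]> -> y != 1 -> y = t.
Proof.
move=> ot /cycleP[i ->]; rewrite -expg_mod_order ot.
have : (i %% 2 < 2)%N by rewrite ltn_pmod.
by case: (i %% 2) => [|[|]] //; rewrite expg0 eqxx.
Qed.

Arguments roq_index2 {gT p P}.
Arguments cyc2_elt {gT t y}.

Theorem mainTheorem1 (gT : finGroupType) (p : nat) (P : {group gT}) :
  prime p -> p.-group P -> roquette P ->
  ~ (exists T : {group gT},
       [/\ T :!=: 1, expansive P T & gcore T P = 1]).
Proof.
move=> pr_p pP roqP [T [ntT [sTP expT] coreT]].
suff nTP : P \subset 'N(T).
  have := gcore_max (subxx T) nTP; rewrite coreT subG1 => T1.
  by rewrite T1 in ntT.
have [cPP | ncPP] := boolP (abelian P); first exact: sub_abelian_norm.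
have [X [p2 nsX cycX iX]] := roq_index2 pP roqP ncPP.
have [sXP nXP] := andP nsX.
have TX1 : T :&: X = 1.
  apply/trivgP; rewrite -coreT; apply: gcore_max; first exact: subsetIl.
  apply: normal_norm; apply: char_normal_trans nsX.
  by rewrite sub_cyclic_char // subsetIr.
have oT : #|T| = 2.
  have := subset_leq_card (mul_subG sTP sXP); rewrite TI_cardMg //.
  rewrite -(Lagrange sXP) iX mulnC leq_pmul2l ?cardG_gt0 // => leT.
  have := cardG_gt1 T; rewrite ntT.
  by move: leT; case: #|T| => [|[|[|]]].
have [t defT] : exists t, T :=: <[t]>.
  by apply/cyclicP; apply: prime_cyclic; rewrite oT.
have ot : #[t] = 2 by rewrite orderE -defT.
have tT : t \in T by rewrite defT cycle_id.
have tP : t \in P := subsetP sTP t tT.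
have ht1 : forall h, t ^ h != 1.
  by move=> h; rewrite -(conj1g h) (inj_eq (@conjg_inj _ h)) -order_eq1 ot.
have comm_t : forall h, h \in P -> commute t (t ^ h).
  move=> h Ph; apply/commgP/conjg_fixP.
  have [nTh | nTh] := boolP (h \in 'N(T)).
    have : t ^ h \in T by rewrite memJ_norm.
    rewrite defT => /(cyc2_elt ot) H; rewrite H; [by rewrite /conjg mulKg|exact: ht1].
  have gP : h^-1 \in P by rewrite groupV.
  have gN : h^-1 \notin 'N_P(T) by rewrite inE gP groupV.
  have := expT _ gP gN; rewrite /lconj invgK => prT.
  have : (T :^ h :&: 'N_P(T)) :!=: 1.
    apply: contraTneq prT => ->; rewrite mul1g properE negb_and negbK.
    by rewrite gcore_sub orbT.
  case/trivgPn => u /setIP[uTh uN] nu1.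
  have otJ : #[t ^ h] = 2 by rewrite orderJ.
  have uTh2 : u \in <[t ^ h]> by rewrite cycleJ -defT. have eu := cyc2_elt otJ uTh2 nu1.
  rewrite -eu; have : u \in P :&: 'N(T) := uN. move=> /setIP[_ uN2].
  have : t ^ u \in T by rewrite memJ_norm //.
  rewrite defT => /(cyc2_elt ot) H; rewrite H //.
pose W := <<t ^: P>>.
have nsW : W <| P.
  rewrite /normal gen_subG class_subG //=.
  exact: subset_trans (class_norm t P) (norm_gen _).
have cW : abelian W.
  rewrite abelian_gen; apply/centsP => a /imsetP[h Ph ->] b /imsetP[k Pk ->].
  have := comm_t (k * h^-1) (groupM Pk (groupVr Ph)).
  move=> C; have E : t ^ k = (t ^ (k * h^-1)) ^ h by rewrite -conjgM mulgKV.
  by rewrite /commute E -!conjMg C.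
have cycW := roqP _ nsW cW.
apply/normsP => h Ph; rewrite defT -cycleJ; apply/eqP.
rewrite (eq_subG_cyclic cycW) ?cycle_subG ?mem_gen ?memJ_class ?class_refl //.
by rewrite -!orderE orderJ.
Qed.
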